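(* Let $\Phi$ be an extremal instance and fix a resampling table $(\omega_{i,j})$. Suppose that, for some sequence of choices of false clauses, $\mathrm{PRS}(\Phi,\mathcal D)$ run on this table terminates with a certain transcript. Then, for every other sequence of choices of false clauses, $\mathrm{PRS}(\Phi,\mathcal D)$ run on the same table also terminates, and it terminates with the same transcript, after the same number of iterations.
   Context: Setting: For $i\in[n]$, $X_i$ takes values in a countable set $D_i$ equipped with a probability distribution $\mathcal D_i$; $\mathcal D=\mathcal D_1\times\cdots\times\mathcal D_n$ is the product distribution. A formula $\Phi=\phi_1\wedge\cdots\wedge\phi_m$ is a conjunction of clauses. Each clause $\phi_k$ is a Boolean function of the variables $X_i$ with $i\in\mathrm{Scp}(\phi_k)$, where $\mathrm{Scp}(\phi_k)\subseteq[n]$ is a nonempty set called the scope of $\phi_k$. The instance $\Phi$ is extremal if for all $1\le k<\ell\le m$ with $\mathrm{Scp}(\phi_k)\cap\mathrm{Scp}(\phi_\ell)\neq\emptyset$, the formula $\phi_k\vee\phi_\ell$ is true under every assignment. Algorithm $\mathrm{PRS}(\Phi,\mathcal D)$: sample $\mathbf X$ from $\mathcal D$. While $\Phi(\mathbf X)$ is false, choose any clause $\phi_k$ false under the current $\mathbf X$ and resample all $X_i$, $i\in\mathrm{Scp}(\phi_k)$, from $\mathcal D_i$. Resampling table: an array $(\omega_{i,j}: i\in[n],\ j\in\{0,1,2,\dots\})$ with each $\omega_{i,j}\in D_i$. Running PRS on the table means the following. Let $j(i,0)=0$ and $X_i^0=\omega_{i,0}$. In iteration $t$, where the scope $\mathrm{Scp}(\phi_{k_t})$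 of a clause $\phi_{k_t}$ false at time $t-1$ is resampled, set $j(i,t)=j(i,t-1)+1$ for $i\in\mathrm{Scp}(\phi_{k_t})$ and $j(i,t)=j(i,t-1)$ otherwise, and let $X_i^t=\omega_{i,j(i,t)}$. Thus only the choice of clauses remains free. The frontier at time $t$ is $F(t)=(j(1,t),\dots,j(n,t))$. Each iteration $t$ creates a resampling block $\{(i,j(i,t-1)): i\in\mathrm{Scp}(\phi_{k_t})\}$; these blocks partition $\{(i,j): j<j(i,t)\}$. The transcript at time $t$ is the frontier $F(t)$ together with this partition into resampling blocks. *)

(* Defs.v *)
From HB Require Import structures.
From mathcomp Require Import all_boot.
From mathcomp Require Import finmap.

Set Implicit Arguments.
Unset Strict Implicit.
Unset Printing Implicit Defensive.

Local Open Scope fset_scope.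

Section PRS.

(* n variables X_i, i : 'I_n, with X_i valued in the countable set D i;
   m clauses phi_k, k : 'I_m, with scopes scp k. *)
Variables (n m : nat) (D : 'I_n -> countType).
Variables (scp : 'I_m -> {set 'I_n}) (phi : 'I_m -> (forall i, D i) -> bool).

Definition scopes_nonempty : Prop := forall k, scp k != set0.

Definition clauses_local : Prop :=
  forall k (x y : forall i, D i),
    (forall i, i \in scp k -> x i = y i) -> phi k x = phi k y.

Definition Phi (x : forall i, D i) : bool := [forall k, phi k x].

Definition extremal : Prop :=
  forall k l : 'I_m, (k < l)%N -> scp k :&: scp l != set0 ->
    forall x : forall i, D i, phi k x || phi l x.

Variable omega : forall i, nat -> D i.

(* Frontier after running the sequence of clause choices s:
   F(t) = (j(1,t),...,j(n,t)), j(i,0) = 0, and j(i,t) = j(i,t-1) + [i in Scp(phi_{k_t})]. *)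
Definition frontier_step (F : {ffun 'I_n -> nat}) (k : 'I_m) : {ffun 'I_n -> nat} :=
  [ffun i => (F i + (i \in scp k))%N].

Definition frontier (s : seq 'I_m) : {ffun 'I_n -> nat} :=
  foldl frontier_step [ffun => 0%N] s.

(* Current assignment X^t_i = omega_{i, j(i,t)}. *)
Definition state (F : {ffun 'I_n -> nat}) : forall i, D i := fun i => omega i (F i).

Definition valid_run (s : seq 'I_m) : Prop :=
  forall (s1 : seq 'I_m) (k : 'I_m) (s2 : seq 'I_m),
    s = s1 ++ k :: s2 -> phi k (state (frontier s1)) = false.

Definition terminating_run (s : seq 'I_m) : Prop :=
  valid_run s /\ Phi (state (frontier s)).

Definition block (F : {ffun 'I_n -> nat}) (k : 'I_m) : {fset ('I_n * nat)} :=
  [fset p | p in [seq (i, F i) | i <- enum (scp k)]].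

Fixpoint blocks_from (pre s : seq 'I_m) : {fset {fset ('I_n * nat)}} :=
  match s with
  | [::] => fset0
  | k :: s' => block (frontier pre) k |` blocks_from (rcons pre k) s'
  end.

Definition transcript (s : seq 'I_m) : {ffun 'I_n -> nat} * {fset {fset ('I_n * nat)}} :=
  (frontier s, blocks_from [::] s).

End PRS.

(* Main.v *)
Require Import Defs.
From HB Require Import structures.
From mathcomp Require Import all_boot.
From mathcomp Require Import finmap.

Set Implicit Arguments.
Unset Strict Implicit.
Unset Printing Implicit Defensive.

Local Open Scope fset_scope.

Fixpoint validR {n m} {D : 'I_n -> countType} (scp : 'I_m -> {set 'I_n})
  (phi : 'I_m -> (forall i, D i) -> bool) (omega : forall i, nat -> D i)
  (F : {ffun 'I_n -> nat}) (s : seq 'I_m) : Prop :=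
  match s with
  | [::] => True
  | k :: r => phi k (state omega F) = false /\ validR scp phi omega (frontier_step scp F k) r
  end.

Fixpoint blocksF {n m} (scp : 'I_m -> {set 'I_n}) (F : {ffun 'I_n -> nat}) (s : seq 'I_m)
  : {fset {fset ('I_n * nat)}} :=
  match s with
  | [::] => fset0
  | k :: r => block scp F k |` blocksF scp (frontier_step scp F k) r
  end.

Lemma valid_runR n m (D : 'I_n -> countType) scp (phi : 'I_m -> (forall i, D i) -> bool) omega :
  forall s F, (forall s1 k s2, s = s1 ++ k :: s2 ->
       phi k (state omega (foldl (frontier_step scp) F s1)) = false) ->
  validR scp phi omega F s.
Proof.
elim=> [|x r IH] F H //=; split; first exact: (H [::] x r).
apply: IH => s1 k s2 E; apply: (H (x :: s1) k s2); by rewrite E.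
Qed.

Lemma blocks_fromF n m (scp : 'I_m -> {set 'I_n}) :
  forall s pre, blocks_from scp pre s = blocksF scp (frontier scp pre) s.
Proof.
elim=> [|x r IH] pre //=; rewrite IH; congr (_ |` _); congr blocksF.
by rewrite /frontier foldl_rcons.
Qed.

Lemma step_out n m (scp : 'I_m -> {set 'I_n}) F x i :
  i \notin scp x -> frontier_step scp F x i = F i.
Proof. by move=> Hi; rewrite /frontier_step ffunE (negbTE Hi) addn0. Qed.

Lemma step_comm n m (scp : 'I_m -> {set 'I_n}) F x l :
  frontier_step scp (frontier_step scp F x) l = frontier_step scp (frontier_step scp F l) x.
Proof. by apply/ffunP=> i; rewrite !ffunE addnAC. Qed.

Lemma block_out n m (scp : 'I_m -> {set 'I_n}) F x l :
  scp x :&: scp l = set0 -> block scp (frontier_step scp F x) l = block scp F l.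
Proof.
move=> Hd.
have E : [seq (i, frontier_step scp F x i) | i <- enum (scp l)] = [seq (i, F i) | i <- enum (scp l)].
  apply/eq_in_map => i; rewrite mem_enum => Hi.
  rewrite step_out //; apply/negP => Hx.
  by move/setP: Hd => /(_ i); rewrite inE Hx Hi inE.
by rewrite /block E.
Qed.

Lemma phi_out n m (D : 'I_n -> countType) scp (phi : 'I_m -> (forall i, D i) -> bool) omega
  (Hloc : clauses_local scp phi) F x l :
  scp x :&: scp l = set0 ->
  phi l (state omega (frontier_step scp F x)) = phi l (state omega F).
Proof.
move=> Hd; apply: Hloc => i Hi; rewrite /state step_out //; apply/negP => Hx.
by move/setP: Hd => /(_ i); rewrite inE Hx Hi inE.
Qed.

Lemma disj n m (D : 'I_n -> countType) scp (phi : 'I_m -> (forall i, D i) -> bool)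
  (Hext : extremal scp phi) (x : forall i, D i) k l :
  k != l -> phi k x = false -> phi l x = false -> scp k :&: scp l = set0.
Proof.
move=> Hkl Hk Hl; apply/eqP; apply/negPn/negP => Hne.
case: (ltngtP k l) => H.
- by have := Hext k l H Hne x; rewrite Hk Hl.
- by have := Hext l k H; rewrite setIC => /(_ Hne x); rewrite Hk Hl.
- by move: Hkl; rewrite (val_inj H) eqxx.
Qed.

Lemma swap1 n m (D : 'I_n -> countType) scp (phi : 'I_m -> (forall i, D i) -> bool) omega
  (Hloc : clauses_local scp phi) F x l r :
  scp x :&: scp l = set0 ->
  validR scp phi omega F (x :: l :: r) ->
  [/\ validR scp phi omega F (l :: x :: r),
      foldl (frontier_step scp) F (x :: l :: r) = foldl (frontier_step scp) F (l :: x :: r) &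
      blocksF scp F (x :: l :: r) = blocksF scp F (l :: x :: r)].
Proof.
move=> Hd /= [Hx [Hl Hr]].
have Hd' : scp l :&: scp x = set0 by rewrite setIC.
split => /=.
- rewrite -(phi_out omega Hloc F Hd) Hl; split => //.
  by rewrite (phi_out omega Hloc F Hd') Hx step_comm; split.
- by rewrite step_comm.
- rewrite step_comm (block_out F Hd) (block_out F Hd').
  by rewrite !fsetUA (fsetUC [fset block scp F x]).

Qed.

Lemma swapN n m (D : 'I_n -> countType) scp (phi : 'I_m -> (forall i, D i) -> bool) omega
  (Hloc : clauses_local scp phi) l b :
  forall a F, all (fun x => scp x :&: scp l == set0) a ->
  validR scp phi omega F (a ++ l :: b) ->
  [/\ validR scp phi omega F (l :: a ++ b),
      foldl (frontier_step scp) F (a ++ l :: b) = foldl (frontier_step scp) F (l :: a ++ b) &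
      blocksF scp F (a ++ l :: b) = blocksF scp F (l :: a ++ b)].
Proof.
elim=> [|x a IH] F //= /andP [/eqP Hx Ha] [Hxf Hv].
have [Hv' Hf Hb] := IH _ Ha Hv.
have Hv2 : validR scp phi omega F (x :: l :: a ++ b) by split.
have [Hv3 Hf3 Hb3] := swap1 Hloc Hx Hv2.
split => //.
- by rewrite Hf; exact: Hf3.
- by rewrite Hb; exact: Hb3.
Qed.

Lemma find_l n m (D : 'I_n -> countType) scp (phi : 'I_m -> (forall i, D i) -> bool) omega
  (Hloc : clauses_local scp phi) (Hext : extremal scp phi) l :
  forall s G, validR scp phi omega G s ->
  Phi phi (state omega (foldl (frontier_step scp) G s)) ->
  phi l (state omega G) = false ->
  exists a b, s = a ++ l :: b /\ all (fun x => scp x :&: scp l == set0) a.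
Proof.
elim=> [|x r IH] G /=.
- by move=> _ /forallP /(_ l) ->.
- move=> [Hx Hv] Hp Hl.
  case: (eqVneq x l) => [-> | Hxl]; first by exists [::], r.
  have Hd := disj Hext Hxl Hx Hl.
  have Hl' : phi l (state omega (frontier_step scp G x)) = false
    by rewrite (phi_out omega Hloc G Hd).
  have [a [b [-> Ha]]] := IH _ Hv Hp Hl'.
  by exists (x :: a), b; split => //=; rewrite Ha andbT Hd eqxx.
Qed.

Lemma mainL n m (D : 'I_n -> countType) scp (phi : 'I_m -> (forall i, D i) -> bool) omega
  (Hloc : clauses_local scp phi) (Hext : extremal scp phi) :
  forall N s F, size s <= N -> validR scp phi omega F s ->
  Phi phi (state omega (foldl (frontier_step scp) F s)) ->
  forall s', validR scp phi omega F s' ->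
   size s' <= size s /\
   (Phi phi (state omega (foldl (frontier_step scp) F s')) ->
     [/\ size s' = size s,
         foldl (frontier_step scp) F s' = foldl (frontier_step scp) F s &
         blocksF scp F s' = blocksF scp F s]).
Proof.
elim=> [|N IH] s F.
- rewrite leqn0 => /nilP -> _ /= /forallP Hp [|l s'] //= [Hl _].
  by rewrite Hp in Hl.
case: s => [|k s0] Hs.
- move=> _ /= /forallP Hp [|l s'] //= [Hl _]; by rewrite Hp in Hl.
move=> /= [Hk Hv0] Hp [|l s'] /=.
- by move=> _; split => // /forallP /(_ k); rewrite Hk.
move=> [Hl Hv'].
case: (eqVneq l k) => [Elk | Hlk].
- subst l.
  have [H1 H2] := IH s0 _ Hs Hv0 Hp s' Hv'.
  split => // /H2 [-> -> ->]; by split.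
have Hd := disj Hext Hlk Hl Hk.
have Hd' : scp k :&: scp l = set0 by rewrite setIC.
have Hl' : phi l (state omega (frontier_step scp F k)) = false
  by rewrite (phi_out omega Hloc F Hd').
have [a [b [E Ha]]] := find_l Hloc Hext Hv0 Hp Hl'.
subst s0.
have [Hv1 Hf1 Hb1] := swapN Hloc Ha Hv0.
have Hv2 : validR scp phi omega F (k :: l :: a ++ b) by split.
have [Hv3 Hf3 Hb3] := swap1 Hloc Hd' Hv2.
move: Hv3 => /= [_ Hv4].
have Hsz : size (k :: a ++ b) <= N by move: Hs; rewrite /= !size_cat /= addnS.
have HfE : foldl (frontier_step scp) (frontier_step scp F l) (k :: a ++ b) =
           foldl (frontier_step scp) (frontier_step scp F k) (a ++ l :: b).
  by rewrite Hf1; exact: (esym Hf3).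
have Hp4 : Phi phi (state omega (foldl (frontier_step scp) (frontier_step scp F l) (k :: a ++ b)))
  by rewrite HfE.
have [H1 H2] := IH _ _ Hsz Hv4 Hp4 s' Hv'.
split.
- by move: H1; rewrite /= !size_cat /= addnS.
move=> /H2 [Hs2 Hf2 Hb2]; split.
- by rewrite Hs2 /= !size_cat /= addnS.
- by rewrite Hf2 HfE.
- rewrite Hb2 Hb1.
  by have := Hb3; rewrite /= => ->.
Qed.

Theorem lemma2 (n m : nat) (D : 'I_n -> countType)
    (scp : 'I_m -> {set 'I_n}) (phi : 'I_m -> (forall i, D i) -> bool)
    (Hne : scopes_nonempty scp) (Hloc : clauses_local scp phi)
    (Hext : extremal scp phi)
    (omega : forall i, nat -> D i) (s : seq 'I_m) :
  terminating_run scp phi omega s ->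
  forall s' : seq 'I_m, valid_run scp phi omega s' ->
    (size s' <= size s)%N /\
    (Phi phi (state omega (frontier scp s')) ->
       size s' = size s /\ transcript scp s' = transcript scp s).
Proof.
move=> [Hv Hp] s' Hv'.
have Hv1 := valid_runR Hv; have Hv1' := valid_runR Hv'.
have [H1 H2] := mainL Hloc Hext (leqnn (size s)) Hv1 Hp Hv1'.
split => // /H2 [Hs Hf Hb]; split => //.
rewrite /transcript !blocks_fromF /=.
by rewrite /frontier Hf Hb.
Qed.
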